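(* Let $E$ be an equivalence relation on $2^\mathbb{N}$. Then $E$ is $\Sigma^0_2$-graphable if and only if $E$ is $\Sigma^0_2$. Moreover, this relativizes: for any real parameter $a$, $E$ is $\Sigma^0_2(a)$-graphable if and only if $E$ is $\Sigma^0_2(a)$.
   Context: For a pointclass $\Gamma$, $E$ is $\Gamma$-graphable if there is a simple undirected graph $G\subseteq 2^\mathbb{N}\times2^\mathbb{N}$ in $\Gamma$ whose connectedness relation (connected by a finite path) equals $E$. $\Sigma^0_2$ is the lightface class. *)

(* Defs.v *)
From Stdlib Require Import List Relations.
Import ListNotations.

Definition Cantor := nat -> bool.

Inductive prog : Type :=
| PZero : prog
| PSucc : prog
| PProj : nat -> prog
| POrc  : nat -> prog                (* oracle j queried at first argument: 1 if true, 0 if false *)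
| PComp : prog -> list prog -> prog
| PRec  : prog -> prog -> prog       (* primitive recursion on first argument *)
| PMu   : prog -> prog.              (* least n with f (n :: v) = 0 *)

Inductive eval (O : nat -> Cantor) : prog -> list nat -> nat -> Prop :=
| eZero v : eval O PZero v 0
| eSucc v : eval O PSucc v (S (hd 0 v))
| eProj i v : eval O (PProj i) v (nth i v 0)
| eOrc j v : eval O (POrc j) v (if O j (hd 0 v) then 1 else 0)
| eComp f gs v ws r :
    evals O gs v ws -> eval O f ws r -> eval O (PComp f gs) v r
| eRec0 f g v r : eval O f v r -> eval O (PRec f g) (0 :: v) r
| eRecS f g n v r r' :
    eval O (PRec f g) (n :: v) r -> eval O g (n :: r :: v) r' ->
    eval O (PRec f g) (S n :: v) r'
| eMu f v n :
    eval O f (n :: v) 0 ->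
    (forall m, m < n -> exists k, eval O f (m :: v) (S k)) ->
    eval O (PMu f) v n
with evals (O : nat -> Cantor) : list prog -> list nat -> list nat -> Prop :=
| esNil v : evals O [] v []
| esCons g gs v r rs : eval O g v r -> evals O gs v rs -> evals O (g :: gs) v (r :: rs).

Definition oracle3 (a x y : Cantor) : nat -> Cantor :=
  fun j => match j with 0 => a | 1 => x | 2 => y | _ => fun _ => false end.

(* A ⊆ 2^N x 2^N is Sigma^0_2(a): there is an a-computable relation
   R(m,n,x,y) (a program, total on all inputs with oracles a,x,y; R holds
   iff the output is 0) such that A(x,y) <-> exists m, forall n, R(m,n,x,y). *)
Definition Sigma02_rel (a : Cantor) (A : Cantor -> Cantor -> Prop) : Prop :=
  exists p : prog,
    (forall (x y : Cantor) (m n : nat), exists r, eval (oracle3 a x y) p [m; n] r) /\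
    (forall x y : Cantor,
        A x y <-> exists m : nat, forall n : nat, eval (oracle3 a x y) p [m; n] 0).

(* Lightface Sigma^0_2: relativized to a computable (constant false) oracle. *)
Definition Sigma02 (A : Cantor -> Cantor -> Prop) : Prop :=
  Sigma02_rel (fun _ => false) A.

Definition simple_graph (G : Cantor -> Cantor -> Prop) : Prop :=
  (forall x y, G x y -> G y x) /\ (forall x, ~ G x x).

Definition graphable (Gamma : (Cantor -> Cantor -> Prop) -> Prop)
  (E : Cantor -> Cantor -> Prop) : Prop :=
  exists G : Cantor -> Cantor -> Prop,
    simple_graph G /\ Gamma G /\
    (forall x y, clos_refl_trans Cantor G x y <-> E x y).

(* Main.v *)
Require Import Defs.
From Stdlib Require Import List Relations Lia Arith PeanoNat Bool Classical ClassicalEpsilon FunctionalExtensionality.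
Import ListNotations.


Section EI.
Variable O : nat -> Cantor.
Variable P : prog -> list nat -> nat -> Prop.
Variable Q : list prog -> list nat -> list nat -> Prop.
Hypothesis HZ : forall v, P PZero v 0.
Hypothesis HS : forall v, P PSucc v (S (hd 0 v)).
Hypothesis HP : forall i v, P (PProj i) v (nth i v 0).
Hypothesis HO : forall j v, P (POrc j) v (if O j (hd 0 v) then 1 else 0).
Hypothesis HC : forall f gs v ws r, evals O gs v ws -> Q gs v ws -> eval O f ws r -> P f ws r -> P (PComp f gs) v r.
Hypothesis HR0 : forall f g v r, eval O f v r -> P f v r -> P (PRec f g) (0 :: v) r.
Hypothesis HRS : forall f g n v r r', eval O (PRec f g) (n :: v) r -> P (PRec f g) (n :: v) r -> eval O g (n :: r :: v) r' -> P g (n :: r :: v) r' -> P (PRec f g) (S n :: v) r'.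
Hypothesis HM : forall f v n, eval O f (n :: v) 0 -> P f (n :: v) 0 -> (forall m, m < n -> exists k, eval O f (m :: v) (S k) /\ P f (m :: v) (S k)) -> P (PMu f) v n.
Hypothesis HN : forall v, Q [] v [].
Hypothesis HCo : forall g gs v r rs, eval O g v r -> P g v r -> evals O gs v rs -> Q gs v rs -> Q (g :: gs) v (r :: rs).

Fixpoint eval_ind2 p v r (H : eval O p v r) {struct H} : P p v r :=
  match H in eval _ p v r return P p v r with
  | eZero _ v => HZ v
  | eSucc _ v => HS v
  | eProj _ i v => HP i v
  | eOrc _ j v => HO j v
  | eComp _ f gs v ws r Hs Hf => HC f gs v ws r Hs (evals_ind2 gs v ws Hs) Hf (eval_ind2 f ws r Hf)
  | eRec0 _ f g v r Hf => HR0 f g v r Hf (eval_ind2 f v r Hf)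
  | eRecS _ f g n v r r' H1 H2 => HRS f g n v r r' H1 (eval_ind2 _ _ _ H1) H2 (eval_ind2 _ _ _ H2)
  | eMu _ f v n H0 Hl => HM f v n H0 (eval_ind2 _ _ _ H0)
       (fun m Hm => match Hl m Hm with ex_intro _ k Hk => ex_intro _ k (conj Hk (eval_ind2 _ _ _ Hk)) end)
  end
with evals_ind2 gs v ws (H : evals O gs v ws) {struct H} : Q gs v ws :=
  match H in evals _ gs v ws return Q gs v ws with
  | esNil _ v => HN v
  | esCons _ g gs v r rs Hg Hs => HCo g gs v r rs Hg (eval_ind2 _ _ _ Hg) Hs (evals_ind2 _ _ _ Hs)
  end.
End EI.

Lemma eval_det O p v r1 : eval O p v r1 -> forall r2, eval O p v r2 -> r1 = r2.
Proof.
  intro H.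
  apply (eval_ind2 O (fun p v r1 => forall r2, eval O p v r2 -> r1 = r2)
                     (fun gs v ws => forall ws2, evals O gs v ws2 -> ws = ws2)); auto;
  clear p v r1 H; intros.
  - inversion H; auto.
  - inversion H; auto.
  - inversion H; auto.
  - inversion H; auto.
  - inversion H3; subst. match goal with Hs : evals _ _ _ _ |- _ => apply H0 in Hs; subst end. auto.
  - inversion H1; subst. auto.
  - inversion H3; subst. match goal with Hs : eval _ (PRec _ _) _ _ |- _ => apply H0 in Hs; subst end. eauto.
  - match goal with Hm : eval _ (PMu _) _ _ |- _ => inversion Hm; subst end.
    destruct (Nat.lt_trichotomy n r2) as [Hl|[Hl|Hl]]; auto.
    + match goal with Hq : forall m, m < r2 -> exists k, eval _ _ _ _ |- _ => destruct (Hq n Hl) as [k Hk] end.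
      apply H0 in Hk. discriminate.
    + match goal with Hq : forall m, m < n -> exists k, _ /\ _ |- _ => destruct (Hq r2 Hl) as [k [_ Hk]] end.
      match goal with Hq : eval _ _ (r2 :: _) 0 |- _ => apply Hk in Hq end. discriminate.
  - inversion H; auto.
  - inversion H3; subst. f_equal; auto.
Qed.

Section Comb.
Variable O : nat -> Cantor.

Lemma eRec_gen F G w (st : nat -> nat) :
  eval O F w (st 0) -> (forall j, eval O G (j :: st j :: w) (st (S j))) ->
  forall n, eval O (PRec F G) (n :: w) (st n).
Proof. intros H0 HS n; induction n. constructor; auto. econstructor; eauto. Qed.

Fixpoint K c := match c with 0 => PZero | S c => PComp PSucc [K c] end.
Lemma eK c v : eval O (K c) v c.
Proof. induction c. constructor. econstructor. repeat constructor; eauto. constructor. Qed.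

Lemma e1 f g v a r : eval O g v a -> eval O f [a] r -> eval O (PComp f [g]) v r.
Proof. intros. econstructor; eauto. repeat constructor; auto. Qed.
Lemma e2 f g1 g2 v a b r : eval O g1 v a -> eval O g2 v b -> eval O f [a;b] r -> eval O (PComp f [g1;g2]) v r.
Proof. intros. econstructor; eauto. repeat constructor; auto. Qed.
Lemma e3 f g1 g2 g3 v a b c r : eval O g1 v a -> eval O g2 v b -> eval O g3 v c -> eval O f [a;b;c] r -> eval O (PComp f [g1;g2;g3]) v r.
Proof. intros. econstructor; eauto. repeat constructor; auto. Qed.

Lemma eP i v : eval O (PProj i) v (nth i v 0).
Proof. constructor. Qed.
Lemma eP' i v x : nth i v 0 = x -> eval O (PProj i) v x.
Proof. intros <-; constructor. Qed.

Definition SUCC g := PComp PSucc [g].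
Lemma eSUCC g v a : eval O g v a -> eval O (SUCC g) v (S a).
Proof. intros; eapply e1; eauto. constructor. Qed.

Definition PREDp := PRec PZero (PProj 0).
Definition PRED g := PComp PREDp [g].
Lemma ePRED g v a : eval O g v a -> eval O (PRED g) v (pred a).
Proof. intros; eapply e1; eauto.
  apply (eRec_gen _ _ _ pred). constructor. intros; constructor. Qed.

Definition IFZp := PRec (PProj 0) (PProj 3).
Definition IFZ t a b := PComp IFZp [t;a;b].
Definition ifz (x y z : nat) := match x with 0 => y | _ => z end.
Lemma eIFZ t a b v x y z : eval O t v x -> eval O a v y -> eval O b v z ->
  eval O (IFZ t a b) v (ifz x y z).
Proof. intros; eapply e3; eauto.
  apply (eRec_gen _ _ _ (fun j => ifz j y z)). constructor. intros; constructor. Qed.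

Definition ADDp := PRec (PProj 0) (SUCC (PProj 1)).
Definition ADD g1 g2 := PComp ADDp [g1;g2].
Lemma eADD g1 g2 v a b : eval O g1 v a -> eval O g2 v b -> eval O (ADD g1 g2) v (a + b).
Proof. intros; eapply e2; eauto.
  apply (eRec_gen _ _ _ (fun j => j + b)). constructor. intros; apply eSUCC; constructor. Qed.

Definition SUBp := PRec (PProj 0) (PRED (PProj 1)).
Definition SUB g1 g2 := PComp SUBp [g2;g1].
Lemma eSUB g1 g2 v a b : eval O g1 v a -> eval O g2 v b -> eval O (SUB g1 g2) v (a - b).
Proof. intros; eapply e2; eauto.
  apply (eRec_gen _ _ _ (fun j => a - j)). simpl. rewrite Nat.sub_0_r. constructor.
  intros. replace (a - S j) with (pred (a - j)) by lia. apply ePRED; constructor. Qed.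

Fixpoint tri n := match n with 0 => 0 | S n => tri n + S n end.
Definition TRIp := PRec PZero (ADD (PProj 1) (SUCC (PProj 0))).
Definition TRI g := PComp TRIp [g].
Lemma eTRI g v a : eval O g v a -> eval O (TRI g) v (tri a).
Proof. intros; eapply e1; eauto.
  apply (eRec_gen _ _ _ tri). constructor. intros; simpl. apply eADD. constructor. apply eSUCC; constructor. Qed.

Fixpoint sdiag M := match M with 0 => 0 | S M => sdiag M + ifz (tri (S (sdiag M)) - S M) 1 0 end.
Definition SDIAGp := PRec PZero (ADD (PProj 1) (IFZ (SUB (TRI (SUCC (PProj 1))) (SUCC (PProj 0))) (K 1) (K 0))).
Definition SDIAG g := PComp SDIAGp [g].
Lemma eSDIAG g v a : eval O g v a -> eval O (SDIAG g) v (sdiag a).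
Proof. intros; eapply e1; eauto.
  apply (eRec_gen _ _ _ sdiag). constructor. intros; simpl. apply eADD. constructor.
  apply eIFZ. apply eSUB. change (tri (sdiag j) + S (sdiag j)) with (tri (S (sdiag j))). apply eTRI, eSUCC; constructor. apply eSUCC; constructor. apply (eK 1 _). apply (eK 0 _). Qed.

Definition psnd M := M - tri (sdiag M).
Definition pfst M := sdiag M - psnd M.
Definition SND g := SUB g (TRI (SDIAG g)).
Definition FST g := SUB (SDIAG g) (SND g).
Lemma eSND g v a : eval O g v a -> eval O (SND g) v (psnd a).
Proof. intros. apply eSUB; auto. apply eTRI, eSDIAG; auto. Qed.
Lemma eFST g v a : eval O g v a -> eval O (FST g) v (pfst a).
Proof. intros. apply eSUB. apply eSDIAG; auto. apply eSND; auto. Qed.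

Fixpoint odd' n := match n with 0 => 0 | S n => ifz (odd' n) 1 0 end.
Fixpoint div2' n := match n with 0 => 0 | S n => div2' n + odd' n end.
Definition ODDp := PRec PZero (IFZ (PProj 1) (K 1) (K 0)).
Definition ODD g := PComp ODDp [g].
Lemma eODD g v a : eval O g v a -> eval O (ODD g) v (odd' a).
Proof. intros; eapply e1; eauto.
  apply (eRec_gen _ _ _ odd'). constructor. intros; simpl. apply eIFZ; [constructor|apply (eK 1 _)|apply (eK 0 _)]. Qed.
Definition DIV2p := PRec PZero (ADD (PProj 1) (ODD (PProj 0))).
Definition DIV2 g := PComp DIV2p [g].
Lemma eDIV2 g v a : eval O g v a -> eval O (DIV2 g) v (div2' a).
Proof. intros; eapply e1; eauto.
  apply (eRec_gen _ _ _ div2'). constructor. intros; simpl. apply eADD. constructor. apply eODD; constructor. Qed.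
Fixpoint shr pos c := match pos with 0 => c | S p => div2' (shr p c) end.
Definition SHRp := PRec (PProj 0) (DIV2 (PProj 1)).
Definition bitc c pos := odd' (shr pos c).
Definition BIT gc gpos := ODD (PComp SHRp [gpos; gc]).
Lemma eBIT gc gp v c p : eval O gc v c -> eval O gp v p -> eval O (BIT gc gp) v (bitc c p).
Proof. intros. apply eODD. eapply e2; eauto.
  apply (eRec_gen _ _ _ (fun j => shr j c)). constructor. intros; simpl. apply eDIV2; constructor. Qed.
Definition POW2p := PRec (K 1) (ADD (PProj 1) (PProj 1)).
Definition POW2 g := PComp POW2p [g].
Lemma ePOW2 g v a : eval O g v a -> eval O (POW2 g) v (2 ^ a).
Proof. intros; eapply e1; eauto.
  apply (eRec_gen _ _ _ (fun j => 2 ^ j)). apply eK. intros; simpl.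
  replace (2 ^ j + (2 ^ j + 0)) with (2^j + 2^j) by lia. apply eADD; constructor. Qed.

End Comb.

Fixpoint rec_it (b : nat) (h : nat -> nat -> nat) n :=
  match n with 0 => b | S n => let r := rec_it b h n in ifz r 0 (h n (pred r)) end.
Fixpoint mu_st (h : nat -> nat) n :=
  match n with 0 => 0 | S j => let s := mu_st h j in ifz s (ifz (h j) 1 (ifz (pred (h j)) (S (S j)) 0)) s end.

Fixpoint Tf (a : Cantor) (L1 L2 : nat -> nat) (fuel : nat) (p : prog) (v : list nat) : nat :=
  match p with
  | PZero => 1
  | PSucc => S (S (hd 0 v))
  | PProj j => S (nth j v 0)
  | POrc j => match j with 0 => S (if a (hd 0 v) then 1 else 0) | 1 => L1 (hd 0 v) | 2 => L2 (hd 0 v) | _ => 1 end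
  | PComp f gs => let rs := map (fun g => Tf a L1 L2 fuel g v) gs in
      if forallb (fun r => negb (r =? 0)) rs then Tf a L1 L2 fuel f (map pred rs) else 0
  | PRec f g => match v with [] => 0 | n :: w =>
      rec_it (Tf a L1 L2 fuel f w) (fun j r => Tf a L1 L2 fuel g (j :: r :: w)) n end
  | PMu f => pred (mu_st (fun j => Tf a L1 L2 fuel f (j :: v)) fuel)
  end.

Definition PROJS off len := map (fun t => PProj (off + t)) (seq 0 len).

Section Tr.
Variable ne : nat.
Variables l1 l2 : prog.

Fixpoint T (p : prog) (k : nat) : prog :=
  let EXT := PROJS 0 ne in
  let HD := match k with 0 => K 0 | _ => PProj ne end in
  match p with
  | PZero => K 1
  | PSucc => SUCC (SUCC HD)
  | PProj j => if j <? k then SUCC (PProj (ne + j)) else K 1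
  | POrc 0 => SUCC (PComp (POrc 0) [HD])
  | POrc 1 => PComp l1 (EXT ++ [HD])
  | POrc 2 => PComp l2 (EXT ++ [HD])
  | POrc _ => K 1
  | PComp f gs => let k' := length gs in
     PComp (fold_right (fun i acc => IFZ (PProj (ne + i)) (K 0) acc)
              (PComp (T f k') (EXT ++ map (fun i => PRED (PProj (ne+i))) (seq 0 k'))) (seq 0 k'))
           (EXT ++ map (fun g => T g k) gs)
  | PRec f g => match k with 0 => K 0 | S k' =>
     PComp (PRec (T f k')
              (IFZ (PProj 1) (K 0)
                 (PComp (T g (S (S k'))) (PROJS 2 ne ++ [PProj 0; PRED (PProj 1)] ++ PROJS (2+ne) k'))))
       (PProj ne :: EXT ++ PROJS (ne+1) k')
   end
  | PMu f =>
     let H := PComp (T f (S k)) (PROJS 2 ne ++ [PProj 0] ++ PROJS (2+ne) k) in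
     PRED (PComp (PRec (K 0) (IFZ (PProj 1) (IFZ H (K 1) (IFZ (PRED H) (SUCC (SUCC (PProj 0))) (K 0))) (PProj 1)))
            (PProj 0 :: EXT ++ PROJS ne k))
  end.
End Tr.

Section PI.
Variable P : prog -> Prop.
Hypothesis H0 : P PZero.
Hypothesis H1 : P PSucc.
Hypothesis H2 : forall i, P (PProj i).
Hypothesis H3 : forall j, P (POrc j).
Hypothesis H4 : forall f gs, P f -> Forall P gs -> P (PComp f gs).
Hypothesis H5 : forall f g, P f -> P g -> P (PRec f g).
Hypothesis H6 : forall f, P f -> P (PMu f).
Fixpoint prog_ind2 p : P p :=
  match p with
  | PZero => H0 | PSucc => H1 | PProj i => H2 i | POrc j => H3 j
  | PComp f gs => H4 f gs (prog_ind2 f)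
      ((fix go gs := match gs return Forall P gs with [] => Forall_nil _ | g :: gs => Forall_cons _ (prog_ind2 g) (go gs) end) gs)
  | PRec f g => H5 f g (prog_ind2 f) (prog_ind2 g)
  | PMu f => H6 f (prog_ind2 f)
  end.
End PI.

Lemma evals_map O {A} (h : A -> prog) (val : A -> nat) idx u :
  (forall t, In t idx -> eval O (h t) u (val t)) -> evals O (map h idx) u (map val idx).
Proof. induction idx; simpl; intros; constructor; auto. Qed.

Lemma evals_app O xs ys u ws1 ws2 : evals O xs u ws1 -> evals O ys u ws2 -> evals O (xs ++ ys) u (ws1 ++ ws2).
Proof. induction 1; simpl; intros; auto. constructor; auto. Qed.

Lemma map_nth_seq (l : list nat) : map (fun t => nth t l 0) (seq 0 (length l)) = l.
Proof.
  induction l; simpl; auto. f_equal. rewrite <- seq_shift, map_map. simpl. auto.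
Qed.

Lemma nth_mid pre l suf t : t < length l -> nth (length pre + t) (pre ++ l ++ suf) 0 = nth t l 0.
Proof. intros. rewrite app_nth2 by lia. replace (length pre + t - length pre) with t by lia.
  rewrite app_nth1; auto. Qed.

Lemma map_nth_mid pre l suf : map (fun t => nth (length pre + t) (pre ++ l ++ suf) 0) (seq 0 (length l)) = l.
Proof.
  rewrite <- (map_nth_seq l) at 2. apply map_ext_in. intros t Ht. apply in_seq in Ht.
  apply nth_mid; lia.
Qed.

Lemma evals_projs O off len pre l suf : off = length pre -> len = length l ->
  evals O (PROJS off len) (pre ++ l ++ suf) l.
Proof. intros -> ->. unfold PROJS.
  pose proof (evals_map O (fun t => PProj (length pre + t)) (fun t => nth (length pre+t) (pre++l++suf) 0) (seq 0 (length l)) (pre++l++suf)) as H.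
  rewrite map_nth_mid in H. apply H. intros; constructor. Qed.

Lemma forallb_map {A B} (f : B -> bool) (g : A -> B) l : forallb f (map g l) = forallb (fun x => f (g x)) l.
Proof. induction l; simpl; auto. rewrite IHl; auto. Qed.

Lemma eval_fold O ne APP appval idx u :
  eval O APP u appval ->
  eval O (fold_right (fun i acc => IFZ (PProj (ne + i)) (K 0) acc) APP idx) u
    (if forallb (fun i => negb (nth (ne+i) u 0 =? 0)) idx then appval else 0).
Proof.
  intros HA. induction idx; simpl; auto.
  replace (if negb (nth (ne + a) u 0 =? 0) && forallb (fun i : nat => negb (nth (ne + i) u 0 =? 0)) idx then appval else 0)
   with (ifz (nth (ne+a) u 0) 0 (if forallb (fun i : nat => negb (nth (ne + i) u 0 =? 0)) idx then appval else 0)).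
  apply eIFZ; auto. constructor. apply (eK O 0).
  destruct (nth (ne + a) u 0); simpl; auto.
Qed.

Lemma evals_projs' O off len pre l suf u : u = pre ++ l ++ suf -> off = length pre -> len = length l ->
  evals O (PROJS off len) u l.
Proof. intros ->; apply evals_projs. Qed.

Lemma map_nth_end pre l : map (fun t => nth (length pre + t) (pre ++ l) 0) (seq 0 (length l)) = l.
Proof. pose proof (map_nth_mid pre l []) as H. rewrite app_nil_r in H. exact H. Qed.

Section TC.
Variable O : nat -> Cantor.
Variable a : Cantor.
Variables L1 L2 : nat -> nat.
Variable ne : nat.
Variables l1 l2 : prog.
Variable ext : list nat.
Hypothesis Hne : length ext = ne.
Hypothesis Hne0 : 0 < ne.
Hypothesis HO : O 0 = a.
Hypothesis Hl1 : forall q, eval O l1 (ext ++ [q]) (L1 q).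
Hypothesis Hl2 : forall q, eval O l2 (ext ++ [q]) (L2 q).

Lemma eHD k v : length v = k -> eval O (match k with 0 => K 0 | _ => PProj ne end) (ext ++ v) (hd 0 v).
Proof.
  intros; destruct v; subst; simpl. apply (eK O 0).
  apply eP'. rewrite app_nth2 by lia. rewrite Nat.sub_diag. auto.
Qed.

Lemma T_correct p : forall k v, length v = k ->
  eval O (T ne l1 l2 p k) (ext ++ v) (Tf a L1 L2 (nth 0 ext 0) p v).
Proof.
  induction p as [| | | |f gs IHf IHgs|f g IHf IHg|f IHf] using prog_ind2; intros k v Hk; simpl.
  - apply (eK O 1).
  - apply eSUCC, eSUCC, eHD; auto.
  - destruct (Nat.ltb_spec i k).
    + apply eSUCC. apply eP'. subst. rewrite <- (app_nil_r v) at 1. apply nth_mid; auto.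
    + rewrite nth_overflow by lia. apply (eK O 1).
  - destruct j as [|[|[|j]]].
    + apply eSUCC. eapply e1. apply eHD; eauto. rewrite <- HO. apply (eOrc O 0 [hd 0 v]).
    + econstructor. apply evals_app. apply (evals_projs' O 0 ne [] ext v); simpl; auto.
      constructor. apply eHD; eauto. constructor. apply Hl1.
    + econstructor. apply evals_app. apply (evals_projs' O 0 ne [] ext v); simpl; auto.
      constructor. apply eHD; eauto. constructor. apply Hl2.
    + apply (eK O 1).
  - set (rs := map (fun g => Tf a L1 L2 (nth 0 ext 0) g v) gs).
    assert (Hrs : length rs = length gs) by (unfold rs; apply length_map).
    econstructor.
    + apply evals_app. apply (evals_projs' O 0 ne [] ext v); simpl; auto.
      unfold rs. apply evals_map. intros g Hg. rewrite Forall_forall in IHgs. apply IHgs; auto.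
    + pose proof (eval_fold O ne (PComp (T ne l1 l2 f (length gs))
          (PROJS 0 ne ++ map (fun i : nat => PRED (PProj (ne + i))) (seq 0 (length gs))))
          (Tf a L1 L2 (nth 0 ext 0) f (map pred rs)) (seq 0 (length gs)) (ext ++ rs)) as HF.
      assert (Hfa : forallb (fun i => negb (nth (ne+i) (ext++rs) 0 =? 0)) (seq 0 (length gs)) = forallb (fun r => negb (r =? 0)) rs).
      { rewrite <- Hrs. rewrite <- forallb_map with (g := fun i => nth (ne + i) (ext ++ rs) 0)
        (f := fun r => negb (r =? 0)). rewrite <- Hne. rewrite map_nth_end. auto. }
      rewrite Hfa in HF. apply HF.
      econstructor. apply evals_app. apply (evals_projs' O 0 ne [] ext rs); simpl; auto.
      rewrite <- Hrs.
      pose proof (evals_map O (fun i => PRED (PProj (ne + i))) (fun i => pred (nth (ne+i) (ext ++ rs) 0)) (seq 0 (length rs)) (ext ++ rs)) as HM.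
      rewrite <- map_map with (g := pred) (f := fun i => nth (ne+i) (ext ++ rs) 0) in HM.
      rewrite <- Hne in HM. rewrite map_nth_end in HM. rewrite Hne in HM. apply HM.
      intros; apply ePRED; constructor.
      apply IHf. rewrite length_map; auto.
  - destruct k as [|k'].
    + destruct v; simpl in Hk; try lia. apply (eK O 0).
    + destruct v as [|n w]; simpl in Hk; try lia. injection Hk; intro Hw.
      econstructor.
      * constructor. apply eP'. rewrite app_nth2 by lia. replace (ne - length ext) with 0 by lia. auto.
        apply evals_app. apply (evals_projs' O 0 ne [] ext (n :: w)); simpl; auto.
        apply (evals_projs' O (ne+1) k' (ext ++ [n]) w []). rewrite app_nil_r, <- app_assoc; auto.
        rewrite length_app; simpl; lia. auto.
      * apply (eRec_gen O _ _ _ (fun j => rec_it (Tf a L1 L2 (nth 0 ext 0) f w)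
                (fun j r => Tf a L1 L2 (nth 0 ext 0) g (j :: r :: w)) j)).
        apply IHf; auto.
        intros j. simpl. apply eIFZ. constructor. apply (eK O 0).
        econstructor. 2: apply IHg; simpl; lia.
        apply evals_app. eapply (evals_projs' O 2 ne [j; _] ext w); simpl; auto.
        constructor. constructor. constructor. apply ePRED; constructor.
        eapply (evals_projs' O (2+ne) k' ([j; _] ++ ext) w []); simpl; try rewrite app_nil_r; auto.
  - apply ePRED. econstructor.
    + constructor. apply eP'. rewrite app_nth1 by lia. auto.
      apply evals_app. apply (evals_projs' O 0 ne [] ext v); simpl; auto.
      apply (evals_projs' O ne k ext v []); try rewrite app_nil_r; auto.
    + apply (eRec_gen O _ _ _ (fun j => mu_st (fun j => Tf a L1 L2 (nth 0 ext 0) f (j :: v)) j)).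
      apply (eK O 0).
      intros j. simpl.
      assert (HH : eval O (PComp (T ne l1 l2 f (S k)) (PROJS 2 ne ++ [PProj 0] ++ PROJS (2 + ne) k))
         (j :: mu_st (fun j0 : nat => Tf a L1 L2 (nth 0 ext 0) f (j0 :: v)) j :: ext ++ v)
         (Tf a L1 L2 (nth 0 ext 0) f (j :: v))).
      { econstructor. 2: apply IHf; simpl; auto.
        apply evals_app. eapply (evals_projs' O 2 ne [j; _] ext v); simpl; auto.
        constructor. constructor.
        eapply (evals_projs' O (2+ne) k ([j; _] ++ ext) v []); simpl; try rewrite app_nil_r; auto. }
      apply eIFZ. constructor. apply eIFZ. apply HH. apply (eK O 1).
      apply eIFZ. apply ePRED, HH. apply eSUCC, eSUCC. constructor. apply (eK O 0). constructor.
Qed.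
End TC.

Definition b2n (b : bool) := if b then 1 else 0.

Lemma mu_st_zero h n : mu_st h n = 0 -> forall j, j < n -> exists k, h j = S (S k).
Proof.
  induction n; simpl; intros H j Hj. lia.
  destruct (mu_st h n) eqn:E; simpl in H; try discriminate.
  destruct (h n) as [|[|k]] eqn:Eh; simpl in H; try discriminate.
  destruct (Nat.eq_dec j n). subst; eauto. apply IHn; auto; lia.
Qed.

Lemma mu_st_found h n r : mu_st h n = S (S r) -> h r = 1 /\ forall j, j < r -> exists k, h j = S (S k).
Proof.
  induction n; simpl; intros H. discriminate.
  destruct (mu_st h n) eqn:E; simpl in H; auto.
  destruct (h n) as [|[|k]] eqn:Eh; simpl in H; try discriminate.
  injection H; intros; subst. split; auto. apply mu_st_zero; auto.
Qed.

Lemma mu_st_complete h n : h n = 1 -> (forall m, m < n -> exists k, h m = S (S k)) ->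
  forall fuel, n < fuel -> mu_st h fuel = S (S n).
Proof.
  intros Hn Hm.
  assert (Z : forall j, j <= n -> mu_st h j = 0).
  { induction j; simpl; intros; auto. rewrite IHj by lia. simpl.
    destruct (Hm j) as [k Hk]; try lia. rewrite Hk. auto. }
  induction fuel; intros Hf. lia.
  simpl. destruct (Nat.eq_dec n fuel).
  - subst. rewrite Z by lia. simpl. rewrite Hn. auto.
  - rewrite IHfuel by lia. auto.
Qed.

Section SC.
Variable a : Cantor.
Variables Z1 Z2 : Cantor.
Definition O3 := oracle3 a Z1 Z2.

Section Sound.
Variables L1 L2 : nat -> nat.
Variable fuel : nat.
Hypothesis C1 : forall q, L1 q = 0 \/ L1 q = S (b2n (Z1 q)).
Hypothesis C2 : forall q, L2 q = 0 \/ L2 q = S (b2n (Z2 q)).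

Lemma Tf_sound p : forall v r, Tf a L1 L2 fuel p v = S r -> eval O3 p v r.
Proof.
  induction p as [| | | |f gs IHf IHgs|f g IHf IHg|f IHf] using prog_ind2; simpl; intros v r H.
  - injection H; intros; subst; constructor.
  - injection H; intros; subst; constructor.
  - injection H; intros; subst; constructor.
  - destruct j as [|[|[|j]]].
    + injection H; intros; subst. apply (eOrc O3 0).
    + destruct (C1 (hd 0 v)) as [E|E]; rewrite E in H; try discriminate.
      injection H; intros; subst. apply (eOrc O3 1).
    + destruct (C2 (hd 0 v)) as [E|E]; rewrite E in H; try discriminate.
      injection H; intros; subst. apply (eOrc O3 2).
    + injection H; intros; subst. apply (eOrc O3 (S (S (S j)))).
  - destruct (forallb (fun r => negb (r =? 0)) (map (fun g => Tf a L1 L2 fuel g v) gs)) eqn:E; try discriminate.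
    econstructor. 2: apply IHf, H.
    clear H IHf. induction gs as [|g gs IH]; simpl in *. constructor.
    inversion IHgs; subst. apply andb_true_iff in E. destruct E as [E1 E2].
    constructor; auto. destruct (Tf a L1 L2 fuel g v) eqn:Eg; try discriminate. simpl. auto.
  - destruct v as [|n w]; try discriminate.
    revert r H. induction n; simpl; intros r H.
    + constructor; auto.
    + destruct (rec_it (Tf a L1 L2 fuel f w) (fun j r => Tf a L1 L2 fuel g (j :: r :: w)) n) eqn:E;
        simpl in H; try discriminate.
      econstructor. apply IHn; eauto. apply IHg; auto.
  - destruct (mu_st (fun j => Tf a L1 L2 fuel f (j :: v)) fuel) as [|[|s]] eqn:E; simpl in H; try discriminate.
    injection H; intros; subst.
    apply mu_st_found in E. destruct E as [E1 E2].
    constructor. apply IHf; auto.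
    intros m Hm. destruct (E2 m Hm) as [k Hk]. exists k. apply IHf; auto.
Qed.
End Sound.

Definition goodL (B : nat) (L1 L2 : nat -> nat) :=
  forall q, q < B -> L1 q = S (b2n (Z1 q)) /\ L2 q = S (b2n (Z2 q)).

Definition CP p v r B := forall fuel L1 L2, B <= fuel -> goodL B L1 L2 -> Tf a L1 L2 fuel p v = S r.

Lemma goodL_mono B B' L1 L2 : B <= B' -> goodL B' L1 L2 -> goodL B L1 L2.
Proof. unfold goodL; intros; apply H0; lia. Qed.

Lemma CP_mono p v r B B' : B <= B' -> CP p v r B -> CP p v r B'.
Proof. unfold CP; intros. apply H0. lia. eapply goodL_mono; eauto. Qed.

Lemma collect (P : nat -> nat -> Prop) n :
  (forall m B B', B <= B' -> P m B -> P m B') ->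
  (forall m, m < n -> exists B, P m B) -> exists B, forall m, m < n -> P m B.
Proof.
  intros Hm; induction n; intros H. exists 0; intros; lia.
  destruct IHn as [B1 HB1]. intros; apply H; lia.
  destruct (H n) as [B2 HB2]. lia.
  exists (max B1 B2). intros m Hm'. destruct (Nat.eq_dec m n).
  subst. eapply Hm. 2: exact HB2. lia. eapply Hm. 2: apply HB1; lia. lia.
Qed.

Lemma Tf_complete p v r : eval O3 p v r -> exists B, CP p v r B.
Proof.
  intro H.
  apply (eval_ind2 O3 (fun p v r => exists B, CP p v r B)
    (fun gs v ws => exists B, forall fuel L1 L2, B <= fuel -> goodL B L1 L2 ->
        map (fun g => Tf a L1 L2 fuel g v) gs = map S ws)); auto; clear p v r H; unfold CP.
  - intros; exists 0; intros; simpl; auto.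
  - intros; exists 0; intros; simpl; auto.
  - intros; exists 0; intros; simpl; auto.
  - intros j v. destruct j as [|[|[|j]]].
    + exists 0; intros; simpl; auto.
    + exists (S (hd 0 v)); intros. simpl. destruct (H0 (hd 0 v)); auto.
    + exists (S (hd 0 v)); intros. simpl. destruct (H0 (hd 0 v)); auto.
    + exists 0; intros; simpl; auto.
  - intros f gs v ws r _ [B1 H1] _ [B2 H2]. exists (max B1 B2). intros fuel L1 L2 Hf Hg.
    simpl. rewrite H1; try lia. 2: (eapply goodL_mono; [|exact Hg]; lia).
    assert (Hfa : forallb (fun r => negb (r =? 0)) (map S ws) = true).
    { clear. induction ws; simpl; auto. }
    rewrite Hfa. rewrite map_map. simpl. rewrite map_id. apply H2. lia. (eapply goodL_mono; [|exact Hg]; lia).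
  - intros f g n v r r' _ [B1 H1] _ [B2 H2]. exists (max B1 B2). intros fuel L1 L2 Hf Hg.
    specialize (H1 fuel L1 L2 ltac:(lia) (goodL_mono B1 (max B1 B2) L1 L2 ltac:(lia) Hg)). simpl in H1 |- *.
    rewrite H1. simpl. apply H2. lia. (eapply goodL_mono; [|exact Hg]; lia).
  - intros f v n _ [B0 H0] Hm.
    destruct (collect (fun m B => exists k, CP f (m :: v) (S k) B) n) as [B1 H1].
    { intros m B B' HB [k Hk]. exists k. eapply CP_mono; eauto. }
    { intros m Hmn. destruct (Hm m Hmn) as [k [_ [B HB]]]. eauto. }
    exists (max (S n) (max B0 B1)). intros fuel L1 L2 Hf Hg. simpl.
    erewrite mu_st_complete; simpl; eauto; try lia.
    apply H0. lia. (eapply goodL_mono; [|exact Hg]; lia).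
    intros m Hmn. destruct (H1 m Hmn) as [k Hk]. exists k. apply Hk. lia. (eapply goodL_mono; [|exact Hg]; lia).
  - intros; exists 0; intros; auto.
  - intros g gs v r rs _ [B1 H1] _ [B2 H2]. exists (max B1 B2). intros fuel L1 L2 Hf Hg.
    simpl. rewrite H1, H2; auto; try lia; (eapply goodL_mono; [|exact Hg]; lia).
Qed.
End SC.

Section Cpt.
Variable g : nat -> nat -> bool.
Definition IO (s : list bool) := forall l0, exists l, l0 <= l /\ forall j, j < length s -> g l j = nth j s false.

Lemma IO_ext s : IO s -> IO (s ++ [true]) \/ IO (s ++ [false]).
Proof.
  intros H. apply NNPP. intro N. apply not_or_and in N. destruct N as [N1 N2].
  apply not_all_ex_not in N1. destruct N1 as [l1 N1].
  apply not_all_ex_not in N2. destruct N2 as [l2 N2].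
  destruct (H (max l1 l2)) as [l [Hl Hj]].
  destruct (g l (length s)) eqn:E.
  - apply N1. exists l. split. lia. intros j Hj'. rewrite length_app in Hj'; simpl in Hj'.
    destruct (Nat.eq_dec j (length s)). subst. rewrite app_nth2 by lia. rewrite Nat.sub_diag; auto.
    rewrite app_nth1 by lia. apply Hj; lia.
  - apply N2. exists l. split. lia. intros j Hj'. rewrite length_app in Hj'; simpl in Hj'.
    destruct (Nat.eq_dec j (length s)). subst. rewrite app_nth2 by lia. rewrite Nat.sub_diag; auto.
    rewrite app_nth1 by lia. apply Hj; lia.
Qed.

Fixpoint pre n : list bool :=
  match n with 0 => [] | S n => pre n ++ [if excluded_middle_informative (IO (pre n ++ [true])) then true else false] end.

Lemma pre_len n : length (pre n) = n.
Proof. induction n; simpl; auto. rewrite length_app; simpl; lia. Qed.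

Lemma pre_IO n : IO (pre n).
Proof.
  induction n; simpl.
  - intros l0; exists l0; split; auto. simpl; intros; lia.
  - destruct (excluded_middle_informative (IO (pre n ++ [true]))); auto.
    destruct (IO_ext _ IHn); tauto.
Qed.

Lemma pre_prefix n m j : n <= m -> j < n -> nth j (pre m) false = nth j (pre n) false.
Proof.
  induction 1; auto. intros Hj. simpl. rewrite app_nth1. auto. rewrite pre_len; lia.
Qed.

Lemma compact : exists Z : nat -> bool, forall L l0, exists l, l0 <= l /\ forall pos, pos < L -> g l pos = Z pos.
Proof.
  exists (fun j => nth j (pre (S j)) false). intros L l0.
  destruct (pre_IO L l0) as [l [Hl Hj]]. exists l; split; auto.
  intros pos Hp. rewrite Hj by (rewrite pre_len; auto). apply pre_prefix; lia.
Qed.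
End Cpt.

Lemma tri_mono a b : a <= b -> tri a <= tri b.
Proof. induction 1; simpl; lia. Qed.

Lemma sdiag_spec M : tri (sdiag M) <= M < tri (S (sdiag M)).
Proof.
  induction M; simpl. lia.
  remember (sdiag M) as s. simpl in IHM.
  destruct (tri s + S s - S M) eqn:E; simpl.
  - rewrite Nat.add_1_r. simpl. lia.
  - rewrite Nat.add_0_r. simpl. lia.
Qed.

Lemma sdiag_unique t M : tri t <= M < tri (S t) -> sdiag M = t.
Proof.
  intros H. pose proof (sdiag_spec M).
  destruct (Nat.lt_trichotomy (sdiag M) t) as [L|[L|L]]; auto.
  - pose proof (tri_mono (S (sdiag M)) t L). lia.
  - pose proof (tri_mono (S t) (sdiag M) L). lia.
Qed.

Definition pairc a b := tri (a + b) + b.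
Lemma pfst_pair a b : pfst (pairc a b) = a.
Proof. unfold pfst, psnd, pairc. rewrite (sdiag_unique (a+b)). lia. simpl. lia. Qed.
Lemma psnd_pair a b : psnd (pairc a b) = b.
Proof. unfold psnd, pairc. rewrite (sdiag_unique (a+b)). lia. simpl. lia. Qed.

Lemma odd'_le n : odd' n <= 1.
Proof. induction n; simpl; auto. destruct (odd' n); simpl; lia. Qed.
Lemma odd'_S n : odd' (S n) = 1 - odd' n.
Proof. simpl. pose proof (odd'_le n). destruct (odd' n) as [|[|]]; simpl; lia. Qed.
Lemma div2'_SS n : div2' (S (S n)) = S (div2' n).
Proof. change (div2' (S (S n))) with (div2' n + odd' n + odd' (S n)). rewrite odd'_S.
  pose proof (odd'_le n). lia. Qed.
Lemma odd'_2 b c : b <= 1 -> odd' (b + 2 * c) = b.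
Proof. intros Hb. induction c. destruct b as [|[|]]; simpl; auto; lia.
  replace (b + 2 * S c) with (S (S (b + 2 * c))) by lia. rewrite odd'_S, odd'_S, IHc. lia. Qed.
Lemma div2'_2 b c : b <= 1 -> div2' (b + 2 * c) = c.
Proof. intros Hb. induction c. destruct b as [|[|]]; simpl; auto; lia.
  replace (b + 2 * S c) with (S (S (b + 2 * c))) by lia. rewrite div2'_SS, IHc. lia. Qed.
Lemma shr_div2 p c : shr p (div2' c) = div2' (shr p c).
Proof. induction p; simpl; congruence. Qed.
Lemma bitc_le c p : bitc c p <= 1.
Proof. apply odd'_le. Qed.

Lemma bitc_surj (P : nat) : forall f : nat -> bool, exists c, c < 2 ^ P /\ forall pos, pos < P -> bitc c pos = b2n (f pos).
Proof.
  induction P; intros f. exists 0; split; simpl; auto. intros; lia.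
  destruct (IHP (fun j => f (S j))) as [c [Hc Hb]].
  assert (Hf : b2n (f 0) <= 1) by (unfold b2n; destruct (f 0); lia).
  exists (b2n (f 0) + 2 * c). split. simpl. lia.
  intros [|pos] Hp.
  - unfold bitc; simpl. apply odd'_2; auto.
  - unfold bitc. change (shr (S pos) (b2n (f 0) + 2 * c)) with (div2' (shr pos (b2n (f 0) + 2 * c))).
    rewrite <- shr_div2, div2'_2 by auto. apply Hb. lia.
Qed.

Definition vb (x y : Cantor) c nn i q :=
  ifz i (b2n (x q)) (ifz ((i - nn) + (nn - i)) (b2n (y q)) (bitc c (tri (i + q) + q))).
Definition look (x y : Cantor) l c nn i q := ifz (l - q) 0 (S (vb x y c nn i q)).

Definition VB (Ip : prog) := IFZ Ip (PComp (POrc 1) [PProj 4])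
  (IFZ (ADD (SUB Ip (PProj 3)) (SUB (PProj 3) Ip)) (PComp (POrc 2) [PProj 4])
      (BIT (PProj 1) (ADD (TRI (ADD Ip (PProj 4))) (PProj 4)))).
Definition LOOK Ip := IFZ (SUB (PProj 0) (PProj 4)) (K 0) (SUCC (VB Ip)).

Fixpoint bsum (h : nat -> nat) n := match n with 0 => 0 | S n => bsum h n + h n end.
Fixpoint bex (h : nat -> nat) n := match n with 0 => 1 | S n => ifz (bex h n) 0 (h n) end.
Fixpoint itsnd i r := match i with 0 => r | S i => psnd (itsnd i r) end.

Section Q.
Variable a : Cantor.
Variable pp : prog.

Definition TT := T 4 (LOOK (PProj 2)) (LOOK (SUCC (PProj 2))) pp 2.
Definition CHECKP := IFZ (PRED (PComp TT [PProj 2; PProj 3; PProj 4; PProj 5; PProj 6; PProj 0])) (K 0) (K 1).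
Definition LK := PComp (PRec (K 0) (ADD (PProj 1) CHECKP)) [PProj 0; PProj 0; PProj 1; PProj 2; PProj 3; PProj 4].
Definition ITSNDp := PRec (PProj 0) (SND (PProj 1)).
Definition LI := PComp (PRec (K 0) (ADD (PProj 1) (PComp LK [PProj 2; PProj 3; PProj 0; PProj 4; FST (PComp ITSNDp [PProj 0; PProj 5])])))
   [PProj 2; PProj 0; PProj 1; PProj 2; PProj 3].
Definition LC := PComp (PRec (K 1) (IFZ (PProj 1) (K 0) (PComp LI [PProj 2; PProj 0; PProj 3; PProj 4])))
   [POW2 (TRI (ADD (PProj 0) (PProj 1))); PProj 0; PProj 1; PProj 2].
Definition QP := PComp LC [PProj 1; SUCC (FST (PProj 0)); SND (PProj 0)].

Definition chk x y l c i nn m k :=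
  ifz (pred (Tf a (look x y l c nn i) (look x y l c nn (S i)) l pp [m; k])) 0 1.
Definition Qf x y M N :=
  let nn := S (pfst M) in
  bex (fun c => bsum (fun i => bsum (fun k => chk x y N c i nn (pfst (itsnd i (psnd M))) k) N) nn) (2 ^ tri (N + nn)).

Section X.
Variables x y : Cantor.
Let O := oracle3 a x y.

Lemma eLOOK Ip l c i nn q iv : eval O Ip [l;c;i;nn;q] iv ->
  eval O (LOOK Ip) [l;c;i;nn;q] (look x y l c nn iv q).
Proof.
  intros HI. unfold LOOK, look. apply eIFZ. apply eSUB; constructor. apply (eK O 0).
  apply eSUCC. unfold VB, vb. apply eIFZ; auto.
  eapply e1. constructor. exact (eOrc O 1 [q]).
  apply eIFZ. apply eADD; apply eSUB; auto; constructor.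
  eapply e1. constructor. exact (eOrc O 2 [q]).
  apply eBIT. constructor. apply eADD. apply eTRI, eADD; auto; constructor. constructor.
Qed.

Lemma eTT l c i nn m k : eval O TT [l;c;i;nn;m;k] (Tf a (look x y l c nn i) (look x y l c nn (S i)) l pp [m; k]).
Proof.
  apply (T_correct O a _ _ 4 _ _ [l;c;i;nn]); simpl; auto.
  intros q. apply eLOOK. constructor.
  intros q. apply eLOOK. apply eSUCC. constructor.
Qed.

Lemma eLK l c i nn m : eval O LK [l;c;i;nn;m] (bsum (fun k => chk x y l c i nn m k) l).
Proof.
  econstructor. repeat constructor.
  apply (eRec_gen O _ _ _ (bsum (fun k => chk x y l c i nn m k))). apply (eK O 0).
  intros j. simpl. apply eADD. constructor. unfold CHECKP, chk. apply eIFZ.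
  apply ePRED. econstructor. repeat constructor. apply eTT. apply (eK O 0). apply (eK O 1).
Qed.

Lemma eITSND i r : eval O ITSNDp [i; r] (itsnd i r).
Proof. apply (eRec_gen O _ _ _ (fun i => itsnd i r)). constructor. intros; apply eSND; constructor. Qed.

Lemma eLI l c nn rest : eval O LI [l;c;nn;rest]
   (bsum (fun i => bsum (fun k => chk x y l c i nn (pfst (itsnd i rest)) k) l) nn).
Proof.
  econstructor. repeat constructor.
  apply (eRec_gen O _ _ _ (bsum (fun i => bsum (fun k => chk x y l c i nn (pfst (itsnd i rest)) k) l))).
  apply (eK O 0).
  intros j. simpl. apply eADD. constructor. econstructor. 2: apply eLK.
  repeat (apply esCons || apply esNil); try constructor.
  apply eFST. eapply e2; try constructor. apply eITSND.
Qed.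

Lemma eQP M N : eval O QP [M; N] (Qf x y M N).
Proof.
  unfold QP, Qf. econstructor.
  - constructor. constructor. constructor. apply eSUCC, eFST. constructor. constructor. apply eSND. constructor. constructor.
  - econstructor.
    + constructor. apply ePOW2, eTRI, eADD; constructor. repeat constructor.
    + apply (eRec_gen O _ _ _ (bex (fun c => bsum (fun i => bsum (fun k => chk x y N c i (S (pfst M)) (pfst (itsnd i (psnd M))) k) N) (S (pfst M))))).
      apply (eK O 1).
      intros j. cbn [bex]. apply eIFZ. constructor. apply (eK O 0).
      econstructor. 2: apply eLI. repeat constructor.
Qed.
End X.
End Q.

Lemma bsum0 h n : bsum h n = 0 <-> forall j, j < n -> h j = 0.
Proof.
  induction n; simpl. split; intros; auto; lia.
  split. intros H j Hj. destruct (Nat.eq_dec j n). subst; lia. apply IHn; lia.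
  intros H. assert (bsum h n = 0) by (apply IHn; intros; apply H; lia). rewrite H0, H; auto.
Qed.

Lemma bex0 h n : bex h n = 0 <-> exists j, j < n /\ h j = 0.
Proof.
  induction n; simpl. split; [discriminate|intros [j [Hj _]]; lia].
  destruct (bex h n) eqn:E; simpl.
  - split; auto. intros _. destruct IHn as [H _]. destruct H as [j [Hj Hh]]; auto. exists j; split; auto.
  - split. intros H. exists n; auto.
    intros [j [Hj Hh]]. destruct (Nat.eq_dec j n). subst; auto.
    exfalso. assert (exists j, j < n /\ h j = 0) by (exists j; split; auto; lia). apply IHn in H. discriminate.
Qed.

Fixpoint encl (l : list nat) := match l with [] => 0 | m :: l => pairc m (encl l) end.
Lemma itsnd_psnd i r : itsnd i (psnd r) = psnd (itsnd i r).
Proof. induction i; simpl; congruence. Qed.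
Lemma encl_nth l i : i < length l -> pfst (itsnd i (encl l)) = nth i l 0.
Proof.
  revert i; induction l; simpl; intros i Hi. lia.
  destruct i; simpl. apply pfst_pair.
  rewrite <- itsnd_psnd, psnd_pair. apply IHl. lia.
Qed.

Lemma pos_bound i q N nn : i <= nn -> q < N -> tri (i + q) + q < tri (N + nn).
Proof. intros. pose proof (tri_mono (S (i + q)) (N + nn) ltac:(lia)). simpl in H1. lia. Qed.

Section Main.
Variable a : Cantor.
Variable pp : prog.
Hypothesis Htot : forall u w m k, exists r, eval (oracle3 a u w) pp [m; k] r.

Definition step m u w := forall k, eval (oracle3 a u w) pp [m; k] 0.
Definition PathP (x y : Cantor) := exists n' (ms : nat -> nat) (z : nat -> Cantor),
  (forall q, z 0 q = x q) /\ (forall q, z (S n') q = y q) /\ forall i, i < S n' -> step (ms i) (z i) (z (S i)).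

Lemma main_fwd x y : PathP x y -> exists M, forall N, Qf a pp x y M N = 0.
Proof.
  intros [n' [ms [z [Hx [Hy Hs]]]]].
  set (nn := S n').
  exists (pairc n' (encl (map ms (seq 0 nn)))). intros N.
  unfold Qf. rewrite pfst_pair, psnd_pair. fold nn.
  destruct (bitc_surj (tri (N + nn)) (fun pos => z (pfst pos) (psnd pos))) as [c [Hc Hb]].
  apply bex0. exists c. split; auto.
  apply bsum0. intros i Hi. apply bsum0. intros k Hk.
  rewrite encl_nth by (rewrite length_map, length_seq; auto).
  rewrite nth_indep with (d' := ms 0) by (rewrite length_map, length_seq; auto).
  rewrite map_nth, seq_nth by auto. simpl.
  assert (Hl : forall j, j <= nn -> forall q, look x y N c nn j q = 0 \/ look x y N c nn j q = S (b2n (z j q))).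
  { intros j Hj q. unfold look. destruct (N - q) eqn:E; simpl; auto. right. f_equal. unfold vb.
    destruct j; cbn [ifz]. rewrite Hx; auto.
    destruct (S j - nn + (nn - S j)) eqn:E2; cbn [ifz].
    - assert (S j = nn) by lia. rewrite H. unfold nn. rewrite Hy; auto.
    - rewrite Hb. change (tri (S j + q) + q) with (pairc (S j) q). rewrite pfst_pair, psnd_pair; auto.
      apply pos_bound; lia. }
  unfold chk.
  destruct (Tf a (look x y N c nn i) (look x y N c nn (S i)) N pp [ms i; k]) as [|r] eqn:E; simpl; auto.
  apply (Tf_sound a (z i) (z (S i))) in E. 2: apply Hl; lia. 2: apply Hl; lia.
  specialize (Hs i Hi k). unfold O3 in E. rewrite (eval_det _ _ _ _ E _ Hs). auto.
Qed.

Lemma main_bwd x y : (exists M, forall N, Qf a pp x y M N = 0) -> PathP x y.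
Proof.
  intros [M HQ]. set (nn := S (pfst M)). set (ms := fun i => pfst (itsnd i (psnd M))).
  assert (HC : forall N, { c | c < 2 ^ tri (N + nn) /\ forall i, i < nn -> forall k, k < N -> chk a pp x y N c i nn (ms i) k = 0 }).
  { intros N. apply constructive_indefinite_description.
    specialize (HQ N). unfold Qf in HQ. apply bex0 in HQ. destruct HQ as [c [Hc Hb]].
    exists c. split; auto. intros i Hi k Hk. rewrite bsum0 in Hb. specialize (Hb i Hi).
    rewrite bsum0 in Hb. apply Hb; auto. }
  set (cf := fun N => proj1_sig (HC N)).
  destruct (compact (fun N pos => bitc (cf N) pos =? 1)) as [Zb HZ].
  set (z := fun i q => if i =? 0 then x q else if i =? nn then y q else Zb (tri (i + q) + q)).
  exists (pfst M), ms, z. split; [|split].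
  - intros q; unfold z; simpl; auto.
  - intros q; unfold z. fold nn. rewrite Nat.eqb_refl. auto.
  - intros i Hi k. fold nn in Hi.
    destruct (Htot (z i) (z (S i)) (ms i) k) as [r Hr].
    destruct (Tf_complete a (z i) (z (S i)) _ _ _ Hr) as [B HB].
    destruct (HZ (tri (B + nn)) (max B (S k))) as [N [HN Hag]].
    assert (Hl : forall j, j <= nn -> forall q, q < B -> look x y N (cf N) nn j q = S (b2n (z j q))).
    { intros j Hj q Hq. unfold look. replace (N - q) with (S (N - q - 1)) by lia. simpl. f_equal.
      unfold vb, z. destruct j. { cbn [ifz]. simpl. auto. }
      cbn [ifz]. replace (S j =? 0) with false by reflexivity.
      destruct (S j - nn + (nn - S j)) eqn:E2; cbn [ifz].
      - assert (S j = nn) by lia. rewrite H, Nat.eqb_refl. auto.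
      - assert (S j <> nn) by lia. apply Nat.eqb_neq in H. rewrite H.
        rewrite <- Hag. pose proof (bitc_le (cf N) (tri (S j + q) + q)).
        destruct (bitc (cf N) (tri (S j + q) + q)) as [|[|]]; simpl; auto; lia.
        apply pos_bound; lia. }
    assert (HT : Tf a (look x y N (cf N) nn i) (look x y N (cf N) nn (S i)) N pp [ms i; k] = S r).
    { apply HB. lia. intros q Hq. split; apply Hl; lia. }
    destruct (proj2_sig (HC N)) as [_ Hchk]. specialize (Hchk i Hi k ltac:(lia)).
    fold (cf N) in Hchk. unfold chk in Hchk. rewrite HT in Hchk. simpl in Hchk.
    destruct r; simpl in Hchk; try discriminate. exact Hr.
Qed.
End Main.

Definition B1 g := PComp (POrc 1) [g].
Definition B2 g := PComp (POrc 2) [g].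
Definition PP p := IFZ (PProj 0) (IFZ (B1 (PProj 1)) (B2 (PProj 1)) (IFZ (B2 (PProj 1)) (K 1) (K 0)))
   (PComp p [PRED (PProj 0); PProj 1]).
Definition neqv (u w : Cantor) k := ifz (b2n (u k)) (b2n (w k)) (ifz (b2n (w k)) 1 0).

Lemma neqv_eq u w k : neqv u w k = 0 <-> u k = w k.
Proof. unfold neqv, b2n. destruct (u k), (w k); simpl; split; congruence. Qed.
Definition eqv (u w : Cantor) k := ifz (b2n (u k)) (ifz (b2n (w k)) 1 0) (b2n (w k)).
Lemma eqv_neq u w k : eqv u w k = 0 <-> u k <> w k.
Proof. unfold eqv, b2n. destruct (u k), (w k); simpl; split; congruence. Qed.

Section PPs.
Variable a : Cantor.
Variable p : prog.
Hypothesis Htot : forall u w m k, exists r, eval (oracle3 a u w) p [m; k] r.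

Lemma eB1 u w g v q : eval (oracle3 a u w) g v q -> eval (oracle3 a u w) (B1 g) v (b2n (u q)).
Proof. intros; eapply e1; eauto. exact (eOrc (oracle3 a u w) 1 [q]). Qed.
Lemma eB2 u w g v q : eval (oracle3 a u w) g v q -> eval (oracle3 a u w) (B2 g) v (b2n (w q)).
Proof. intros; eapply e1; eauto. exact (eOrc (oracle3 a u w) 2 [q]). Qed.

Lemma ePP u w m k r0 : eval (oracle3 a u w) p [pred m; k] r0 ->
  eval (oracle3 a u w) (PP p) [m; k] (ifz m (neqv u w k) r0).
Proof.
  intros. unfold PP. apply eIFZ. constructor.
  apply eIFZ. apply eB1; constructor. apply eB2; constructor.
  apply eIFZ. apply eB2; constructor. apply (eK _ 1). apply (eK _ 0).
  econstructor; eauto. constructor. apply ePRED; constructor. repeat constructor.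
Qed.

Lemma PP_tot u w m k : exists r, eval (oracle3 a u w) (PP p) [m; k] r.
Proof. destruct (Htot u w (pred m) k) as [r Hr]. eexists; apply ePP; eauto. Qed.

Lemma step_PP m u w : step a (PP p) m u w <->
  (m = 0 /\ forall k, u k = w k) \/ (exists m', m = S m' /\ forall k, eval (oracle3 a u w) p [m'; k] 0).
Proof.
  unfold step. split.
  - intros H. destruct m as [|m'].
    + left. split; auto. intros k. destruct (Htot u w 0 k) as [r Hr].
      pose proof (ePP u w 0 k r Hr) as H0. apply neqv_eq. simpl in H0. eapply eval_det; eauto.
    + right. exists m'; split; auto. intros k. destruct (Htot u w m' k) as [r Hr].
      pose proof (ePP u w (S m') k r Hr). simpl in H0. rewrite (eval_det _ _ _ _ (H k) _ H0). auto.
  - intros [[-> Hk]|[m' [-> Hk]]] k.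
    + destruct (Htot u w 0 k) as [r Hr]. pose proof (ePP u w 0 k r Hr) as H0. simpl in H0.
      replace 0 with (neqv u w k) at 2. auto. apply neqv_eq; auto.
    + apply (ePP u w (S m') k 0). apply Hk.
Qed.

Variable G : Cantor -> Cantor -> Prop.
Hypothesis HG : forall x y, G x y <-> exists m, forall n, eval (oracle3 a x y) p [m; n] 0.

Lemma rt_path x y : clos_refl_trans Cantor G x y -> PathP a (PP p) x y.
Proof.
  intros H. apply clos_rt_rt1n_iff in H. induction H.
  - exists 0, (fun _ => 0), (fun _ => x). split; [|split]; auto.
    intros i _. apply step_PP. left; auto.
  - destruct IHclos_refl_trans_1n as [n' [ms [zz [Hx [Hy Hs]]]]].
    apply HG in H. destruct H as [m Hm].
    assert (Ez : zz 0 = y) by (apply functional_extensionality; auto).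
    exists (S n'), (fun i => match i with 0 => S m | S i => ms i end), (fun i => match i with 0 => x | S i => zz i end).
    split; [|split]; auto.
    intros [|i] Hi.
    + apply step_PP. right. exists m; split; auto. rewrite Ez. auto.
    + apply Hs. lia.
Qed.

Lemma path_rt x y : PathP a (PP p) x y -> clos_refl_trans Cantor G x y.
Proof.
  intros [n' [ms [z [Hx [Hy Hs]]]]].
  assert (Hi : forall i, i <= S n' -> clos_refl_trans Cantor G x (z i)).
  { induction i; intros Hi.
    - replace (z 0) with x. apply rt_refl. apply functional_extensionality; intros; auto.
    - eapply rt_trans. apply IHi; lia.
      destruct (proj1 (step_PP _ _ _) (Hs i ltac:(lia))) as [[_ He]|[m' [_ He]]].
      + replace (z (S i)) with (z i). apply rt_refl. apply functional_extensionality; auto.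
      + apply rt_step. apply HG. exists m'; auto. }
  replace y with (z (S n')). apply Hi; auto. apply functional_extensionality; auto.
Qed.
End PPs.

Lemma hard a E : graphable (Sigma02_rel a) E -> Sigma02_rel a E.
Proof.
  intros [G [_ [[p [Htot Hp]] Hrt]]].
  exists (QP (PP p)). split.
  - intros x y M N. eexists. apply eQP.
  - intros x y. rewrite <- Hrt. split.
    + intros H. apply (rt_path a p Htot G Hp) in H.
      apply (main_fwd a (PP p)) in H.
      destruct H as [M HM]. exists M. intros N. rewrite <- (HM N). apply eQP.
    + intros [M HM]. apply (path_rt a p Htot G Hp). apply (main_bwd a (PP p) (PP_tot a p Htot)).
      exists M. intros N. symmetry. eapply eval_det. apply (HM N). apply eQP.
Qed.

Definition PG p := ADD (PComp p [FST (PProj 0); PProj 1])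
  (IFZ (B1 (SND (PProj 0))) (IFZ (B2 (SND (PProj 0))) (K 1) (K 0)) (B2 (SND (PProj 0)))).

Lemma ePG a x y p M n r : eval (oracle3 a x y) p [pfst M; n] r ->
  eval (oracle3 a x y) (PG p) [M; n] (r + eqv x y (psnd M)).
Proof.
  intros H. unfold PG. apply eADD. econstructor; eauto. constructor. apply eFST; constructor.
  repeat constructor. unfold eqv. apply eIFZ. apply eB1, eSND; constructor.
  apply eIFZ. apply eB2, eSND; constructor. apply (eK _ 1). apply (eK _ 0). apply eB2, eSND; constructor.
Qed.

Lemma easy a E : equivalence Cantor E -> Sigma02_rel a E -> graphable (Sigma02_rel a) E.
Proof.
  intros [Hr Ht Hs] [p [Htot Hp]].
  exists (fun x y => E x y /\ x <> y). split; [split|split].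
  - intros x y [H1 H2]. split; auto.
  - intros x [_ H]; auto.
  - exists (PG p). split.
    + intros x y M n. destruct (Htot x y (pfst M) n) as [r Hr']. eexists; apply ePG; eauto.
    + intros x y. split.
      * intros [HE Hne]. apply Hp in HE. destruct HE as [m Hm].
        assert (exists j, x j <> y j).
        { apply NNPP; intro N. apply Hne. apply functional_extensionality. intros j.
          destruct (Bool.bool_dec (x j) (y j)); auto. exfalso; apply N; eauto. }
        destruct H as [j Hj]. exists (pairc m j). intros n.
        replace 0 with (0 + eqv x y (psnd (pairc m j))). apply ePG. rewrite pfst_pair; auto.
        rewrite psnd_pair. apply eqv_neq in Hj. rewrite Hj; auto.
      * intros [M HM]. 
        assert (A : forall n, eval (oracle3 a x y) p [pfst M; n] 0 /\ eqv x y (psnd M) = 0).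
        { intros n. destruct (Htot x y (pfst M) n) as [r Hr']. pose proof (ePG _ _ _ _ _ _ _ Hr') as H2.
          pose proof (eval_det _ _ _ _ (HM n) _ H2). assert (r = 0) by lia. subst. split; auto. }
        split. apply Hp. exists (pfst M). intros n; apply A.
        intros Exy. destruct (A 0) as [_ Aq]. apply eqv_neq in Aq. apply Aq. rewrite Exy; auto.
  - intros x y. split.
    + intros H. induction H. apply H. apply Hr. eapply Ht; eauto.
    + intros H. destruct (classic (x = y)). subst; apply rt_refl. apply rt_step; auto.
Qed.

Theorem theorem3p10 :
  (forall E : Cantor -> Cantor -> Prop,
      equivalence Cantor E -> (graphable Sigma02 E <-> Sigma02 E)) /\
  (forall (a : Cantor) (E : Cantor -> Cantor -> Prop),
      equivalence Cantor E ->
      (graphable (Sigma02_rel a) E <-> Sigma02_rel a E)).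
Proof.
  assert (M : forall (a : Cantor) (E : Cantor -> Cantor -> Prop),
      equivalence Cantor E -> (graphable (Sigma02_rel a) E <-> Sigma02_rel a E)).
  { intros a E HE. split. apply hard. apply easy; auto. }
  split; auto. intros E HE. exact (M (fun _ => false) E HE).
Qed.
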